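(* Let $[\mu]\in\mathbb PV_n$ be a critical point of $F_n$ of type $\alpha=(k_1<k_2<\dots<k_r;d_1,\dots,d_r)$. Then (i) if $\alpha=(0;n)$, then $F_n([\mu])=\frac4n$; (ii) if $\alpha\neq(0;n)$, then $F_n([\mu])=4\left(n-\dfrac{(k_1d_1+\dots+k_rd_r)^2}{k_1^2d_1+\dots+k_r^2d_r}\right)^{-1}$.
   Context: $V_n$ is the space of bilinear maps $\mu:\mathbb C^n\times\mathbb C^n\to\mathbb C^n$ with standard Hermitian structures. $L^\mu_XY=\mu(X,Y)$, $R^\mu_XY=\mu(Y,X)$, $\mathrm M_\mu=2\sum_i L^\mu_{X_i}(L^\mu_{X_i})^*-2\sum_i (L^\mu_{X_i})^*L^\mu_{X_i}-2\sum_i (R^\mu_{X_i})^*R^\mu_{X_i}$ ($\{X_i\}$ orthonormal), $F_n([\mu])=\operatorname{tr}\mathrm M_\mu^2/\|\mu\|^4$. $[\mu]$ is a critical point of $F_n$ iff $\mathrm M_\mu=c_\mu I+D_\mu$ with $c_\mu\in\mathbb R$ and $D_\mu$ a derivation of $\mu$. For such a critical point there is $c>0$ such that the eigenvalues of $cD_\mu$ are integers with no common divisor $>1$; if $k_1<\dots<k_r$ are the distinct eigenvalues of $cD_\mu$ with multiplicities $d_1,\dots,d_r$, the data $(k_1<\dots<k_r;d_1,\dots,d_r)$ is called the type of $[\mu]$. Type $(0;n)$ means $D_\mu=0$. *)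

(* Defs.v *)
From HB Require Import structures.
From mathcomp Require Import all_boot all_order all_algebra.
From mathcomp Require Import complex.
From mathcomp Require Import reals.
Set Implicit Arguments. Unset Strict Implicit. Unset Printing Implicit Defensive.
Import Order.TTheory GRing.Theory Num.Theory.
Local Open Scope ring_scope.

Section Defs.
Variable R : realType.
Local Notation C := R[i].

(* A bilinear map mu : C^n x C^n -> C^n, given by its structure constants
   w.r.t. the standard (orthonormal) basis e_1..e_n:
   mu(e_i, e_j) = \sum_k (bil i j k) e_k. *)
Definition bil (n : nat) := 'I_n -> 'I_n -> 'I_n -> C.

Definition bil_app n (mu : bil n) (X Y : 'cV[C]_n) : 'cV[C]_n :=
  \col_k \sum_(i < n) \sum_(j < n) X i ord0 * Y j ord0 * mu i j k.

Definition adj n (A : 'M[C]_n) : 'M[C]_n := map_mx Num.conj A^T.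

(* L^mu_{e_i} Y = mu(e_i, Y) ;  R^mu_{e_i} Y = mu(Y, e_i) *)
Definition Lmx n (mu : bil n) (i : 'I_n) : 'M[C]_n := \matrix_(k, j) mu i j k.
Definition Rmx n (mu : bil n) (i : 'I_n) : 'M[C]_n := \matrix_(k, j) mu j i k.

Definition Mmu n (mu : bil n) : 'M[C]_n :=
  2%:R *: (\sum_i Lmx mu i *m adj (Lmx mu i))
  - 2%:R *: (\sum_i adj (Lmx mu i) *m Lmx mu i)
  - 2%:R *: (\sum_i adj (Rmx mu i) *m Rmx mu i).

Definition norm2 n (mu : bil n) : C :=
  \sum_i \sum_j \sum_k `|mu i j k| ^+ 2.

Definition Fn n (mu : bil n) : C := \tr (Mmu mu *m Mmu mu) / (norm2 mu ^+ 2).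

Definition is_derivation n (mu : bil n) (D : 'M[C]_n) : Prop :=
  forall X Y : 'cV[C]_n,
    D *m bil_app mu X Y = bil_app mu (D *m X) Y + bil_app mu X (D *m Y).

(* [mu] is a critical point of F_n with M_mu = c_mu I + D_mu *)
Definition crit_data n (mu : bil n) (c : C) (D : 'M[C]_n) : Prop :=
  [/\ c \is Num.real, is_derivation mu D & Mmu mu = c%:M + D].

(* (ks ; ds) = (k_1 < ... < k_r ; d_1, ..., d_r) is the type of the critical
   point with derivation D: for some c0 > 0 the eigenvalues of c0 D are the
   integers k_i (distinct, increasing) with multiplicities d_i, and they have
   no common divisor > 1 (the latter is waived when D = 0, whose type is
   (0;n) by convention). *)
Definition is_type n (D : 'M[C]_n) (ks : seq int) (ds : seq nat) : Prop :=
  [/\ size ks = size ds, sorted <%R ks, all (fun d => (0 < d)%N) ds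
    & exists c0 : R, 0 < c0 /\
      char_poly ((c0%:C)%C *: D) =
        \prod_(i < size ks) ('X - ((nth 0%Z ks i)%:~R : C)%:P) ^+ (nth 0%N ds i)
      /\ (D = 0 \/ \big[gcdn/0%N]_(i < size ks) `|nth 0%Z ks i|%N = 1%N)].

End Defs.

(* Main.v *)
Require Import Defs.
From HB Require Import structures.
From mathcomp Require Import all_boot all_order all_algebra.
From mathcomp Require Import complex.
From mathcomp Require Import reals.
Import Order.TTheory GRing.Theory Num.Theory.
Local Open Scope ring_scope.
From mathcomp Require Import ring.
Lemma char_poly_conj (F : fieldType) n (A P : 'M[F]_n) : P \in unitmx ->
  char_poly (P *m A *m invmx P) = char_poly A.
Proof.
move=> Pu.
have E : char_poly_mx (P *m A *m invmx P) =
   map_mx (@polyC F) P *m char_poly_mx A *m map_mx (@polyC F) (invmx P).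
  rewrite /char_poly_mx mulmxBr mulmxBl !map_mxM.
  have -> : map_mx (@polyC F) P *m 'X%:M *m map_mx (@polyC F) (invmx P) = 'X%:M.
    by rewrite scalar_mxC -mulmxA -map_mxM (mulmxV Pu) map_mx1 mulmx1.
  by [].
rewrite /char_poly E !det_mulmx !det_map_mx mulrC mulrA -rmorphM.
by rewrite -det_mulmx (mulVmx Pu) det1 rmorph1 mul1r.
Qed.
Lemma sum_flat (C : numClosedFieldType) m (f : nat -> C) (g : nat -> nat) (F : C -> C) :
  \sum_(x <- flatten [seq nseq (g i) (f i) | i : 'I_m <- enum 'I_m]) F x =
  \sum_(i < m) F (f i) * (g i)%:R.
Proof.
rewrite big_flatten big_map big_enum /=; apply: eq_bigr => i _.
by rewrite big_nseq iter_addr_0 mulr_natr.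
Qed.

Lemma eig_sums (C : numClosedFieldType) n (A : 'M[C]_n) m (f : nat -> C) (g : nat -> nat) :
  (0 < n)%N ->
  char_poly A = \prod_(i < m) ('X - (f i)%:P) ^+ g i ->
  \tr A = \sum_(i < m) f i * (g i)%:R /\ \tr (A *m A) = \sum_(i < m) f i ^+ 2 * (g i)%:R.
Proof.
move=> n0 cA.
have [P Pu Ptrig] := Schur A n0.
have Pun := unitarymx_unit Pu.
have PV : invmx P *m P = 1%:M := mulVmx Pun.
have PVE : forall B : 'M[C]_n, B = invmx P *m (P *m B).
  by move=> B; rewrite mulmxA mulVmx // mul1mx.
rewrite /similar_to /= conjumx // in Ptrig.
set T := P *m A *m invmx P in Ptrig.
have trT : \tr A = \tr T.
  rewrite /T mxtrace_mulC; congr (\tr _); exact (PVE A).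
have TT : T *m T = P *m (A *m A) *m invmx P.
  by rewrite /T -!mulmxA (mulmxA (invmx P)) PV mul1mx.
have trTT : \tr (A *m A) = \tr (T *m T).
  rewrite TT [RHS]mxtrace_mulC; congr (\tr _); exact (PVE _).
have cT : char_poly T = char_poly A by rewrite char_poly_conj.
rewrite (char_poly_trig Ptrig) in cT.
set s := [seq T i i | i : 'I_n <- enum 'I_n].
set t := flatten [seq nseq (g i) (f i) | i : 'I_m <- enum 'I_m].
have pst : perm_eq s t.
  apply: prod_XsubC_eq.
  rewrite big_map big_enum /= cT cA big_flatten big_map big_enum /=.
  apply: eq_bigr => i _; rewrite big_nseq.
  by elim: (g i) => [|k IH] //=; rewrite exprS IH.
have Es (F : C -> C) : \sum_(x <- s) F x = \sum_(i < n) F (T i i).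
  by rewrite big_map big_enum.
split.
  rewrite trT -(@sum_flat C m f g id) -(perm_big _ pst) Es.
  by rewrite /mxtrace.
rewrite trTT -(@sum_flat C m f g (fun x => x ^+ 2)) -(perm_big _ pst) Es.
rewrite /mxtrace; apply: eq_bigr => i _.
rewrite mxE (bigD1 i) //= big1 ?addr0 ?expr2 // => k ki.
have /is_trig_mxP Tt := Ptrig.
case: (ltngtP i k) => h.
- by rewrite Tt // mul0r.
- by rewrite (Tt k i h) mulr0.
- by move: ki; rewrite -(inj_eq val_inj) /= h eqxx.
Qed.
Section Tr.
Variable R : realType.
Local Notation C := R[i].
Variable n : nat.
Variable mu : bil R n.

Lemma sum_ex4 (F : 'I_n -> 'I_n -> 'I_n -> 'I_n -> C) :
  \sum_a \sum_b \sum_c \sum_d F a b c d = \sum_b \sum_a \sum_c \sum_d F a b c d.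
Proof. exact: exchange_big. Qed.

Lemma sum_in (F G : 'I_n -> 'I_n -> 'I_n -> 'I_n -> C) :
  (forall a, \sum_b \sum_c \sum_d F a b c d = \sum_b \sum_c \sum_d G a b c d) ->
  \sum_a \sum_b \sum_c \sum_d F a b c d = \sum_a \sum_b \sum_c \sum_d G a b c d.
Proof. by move=> h; apply: eq_bigr => a _; apply: h. Qed.

Lemma LLE a b : (\sum_i Lmx mu i *m adj (Lmx mu i)) a b =
  \sum_i \sum_j mu i j a * (mu i j b)^*.
Proof.
rewrite summxE; apply: eq_bigr => i _; rewrite mxE; apply: eq_bigr => j _.
by rewrite /adj !mxE.
Qed.

Lemma LtLE a b : (\sum_i adj (Lmx mu i) *m Lmx mu i) a b =
  \sum_i \sum_k (mu i a k)^* * mu i b k.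
Proof.
rewrite summxE; apply: eq_bigr => i _; rewrite mxE; apply: eq_bigr => j _.
by rewrite /adj !mxE.
Qed.

Lemma RtRE a b : (\sum_i adj (Rmx mu i) *m Rmx mu i) a b =
  \sum_i \sum_k (mu a i k)^* * mu b i k.
Proof.
rewrite summxE; apply: eq_bigr => i _; rewrite mxE; apply: eq_bigr => j _.
by rewrite /adj !mxE.
Qed.

Lemma trLL : \tr (\sum_i Lmx mu i *m adj (Lmx mu i)) = norm2 mu.
Proof.
rewrite /mxtrace /norm2.
under eq_bigr => a _ do rewrite LLE.
rewrite exchange_big; apply: eq_bigr => i _.
rewrite exchange_big; apply: eq_bigr => j _.
by apply: eq_bigr => k _; rewrite normCK.
Qed.

Lemma trLtL : \tr (\sum_i adj (Lmx mu i) *m Lmx mu i) = norm2 mu.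
Proof.
rewrite /mxtrace /norm2.
under eq_bigr => a _ do rewrite LtLE.
rewrite exchange_big; apply: eq_bigr => i _.
apply: eq_bigr => j _.
by apply: eq_bigr => k _; rewrite normCK mulrC.
Qed.

Lemma trRtR : \tr (\sum_i adj (Rmx mu i) *m Rmx mu i) = norm2 mu.
Proof.
rewrite /mxtrace /norm2.
under eq_bigr => a _ do rewrite RtRE.
apply: eq_bigr => i _.
apply: eq_bigr => j _.
by apply: eq_bigr => k _; rewrite normCK mulrC.
Qed.

Lemma trM : \tr (Mmu mu) = - 2%:R * norm2 mu.
Proof.
rewrite /Mmu !raddfB /= !mxtraceZ trLL trLtL trRtR; ring.
Qed.

End Tr.
Section Der.
Variable R : realType.
Local Notation C := R[i].
Variable n : nat.
Variable mu : bil R n.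

Definition ee (i : 'I_n) : 'cV[C]_n := delta_mx i ord0.

Lemma eeE i l : ee i l ord0 = (l == i)%:R.
Proof. by rewrite /ee mxE andbT. Qed.

Lemma bil_Xe X j : bil_app mu X (ee j) = \col_k \sum_l X l ord0 * mu l j k.
Proof.
apply/matrixP => k z; rewrite ord1 !mxE; apply: eq_bigr => l _.
rewrite (bigD1 j) //= big1 ?addr0 => [|j' hj']; rewrite eeE ?eqxx ?mulr1 //.
by rewrite (negbTE hj') mulr0 mul0r.
Qed.

Lemma bil_eY i Y : bil_app mu (ee i) Y = \col_k \sum_l Y l ord0 * mu i l k.
Proof.
apply/matrixP => k z; rewrite ord1 !mxE.
rewrite (bigD1 i) //= [X in _ + X]big1 ?addr0.
  by apply: eq_bigr => l _; rewrite eeE eqxx mul1r.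
move=> i' hi'.
by rewrite big1 // => l _; rewrite eeE (negbTE hi') !mul0r.
Qed.

Lemma De (D : 'M[C]_n) i : D *m ee i = \col_l D l i.
Proof.
apply/matrixP => k z; rewrite ord1 !mxE.
rewrite (bigD1 i) //= big1 ?addr0 => [|i' hi']; rewrite eeE ?eqxx ?mulr1 //.
by rewrite (negbTE hi') mulr0.
Qed.

Lemma bil_ee i j : bil_app mu (ee i) (ee j) = \col_k mu i j k.
Proof.
rewrite bil_Xe; apply/matrixP => k z; rewrite !mxE.
rewrite (bigD1 i) //= big1 ?addr0 => [|i' hi']; rewrite eeE ?eqxx ?mul1r //.
by rewrite (negbTE hi') mul0r.
Qed.

Lemma der_comp D : is_derivation mu D -> forall i j k,
  \sum_l D k l * mu i j l = \sum_l D l i * mu l j k + \sum_l D l j * mu i l k.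
Proof.
move=> hD i j k.
have := congr1 (fun M : 'cV[C]_n => M k ord0) (hD (ee i) (ee j)).
rewrite /= bil_ee !De bil_Xe bil_eY !mxE.
have E1 : \sum_l D k l * mu i j l = \sum_l D k l * (\col_k0 mu i j k0) l ord0.
  by apply: eq_bigr => l _; rewrite mxE.
have E2 : \sum_l D l i * mu l j k = \sum_l (\col_l0 D l0 i) l ord0 * mu l j k.
  by apply: eq_bigr => l _; rewrite mxE.
have E3 : \sum_l D l j * mu i l k = \sum_l (\col_l0 D l0 j) l ord0 * mu i l k.
  by apply: eq_bigr => l _; rewrite mxE.
by rewrite E1 E2 E3.
Qed.

End Der.
Section Perm.
Variable R : realType.
Local Notation C := R[i].
Variable n : nat.
Implicit Type F : 'I_n -> 'I_n -> 'I_n -> 'I_n -> C.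

Lemma perm_klij F : \sum_k \sum_l \sum_i \sum_j F k l i j =
   \sum_i \sum_j \sum_k \sum_l F k l i j.
Proof.
under eq_bigr => k _ do rewrite exchange_big.
under eq_bigr => k _ do under eq_bigr => i _ do rewrite exchange_big.
rewrite [LHS]exchange_big.
by under eq_bigr => i _ do rewrite exchange_big.
Qed.

Lemma perm_lijk F : \sum_l \sum_i \sum_j \sum_k F l i j k =
   \sum_i \sum_j \sum_k \sum_l F l i j k.
Proof.
rewrite [LHS]exchange_big.
under eq_bigr => i _ do rewrite exchange_big.
by under eq_bigr => i _ do under eq_bigr => j _ do rewrite exchange_big.
Qed.

Lemma perm_ljik F : \sum_l \sum_j \sum_i \sum_k F l i j k =
   \sum_i \sum_j \sum_k \sum_l F l i j k.
Proof.
rewrite -(perm_lijk F); apply: eq_bigr => l _; exact: exchange_big.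
Qed.
End Perm.
Section TrD.
Variable R : realType.
Local Notation C := R[i].
Variable n : nat.
Variable mu : bil R n.
Variable D : 'M[C]_n.

Lemma E1 : \tr (D *m \sum_i (Lmx mu i *m adj (Lmx mu i))) =
  \sum_i \sum_j \sum_k (\sum_l D k l * mu i j l) * (mu i j k)^*.
Proof.
rewrite /mxtrace.
transitivity (\sum_k \sum_l \sum_i \sum_j D k l * (mu i j l * (mu i j k)^* )).
  apply: eq_bigr => k _; rewrite mxE; apply: eq_bigr => l _.
  rewrite LLE mulr_sumr; apply: eq_bigr => i _; by rewrite mulr_sumr.
rewrite perm_klij; apply: eq_bigr => i _; apply: eq_bigr => j _; apply: eq_bigr => k _.
by rewrite mulr_suml; apply: eq_bigr => l _; rewrite mulrA.
Qed.

Lemma E2 : \tr (D *m \sum_i (adj (Rmx mu i) *m Rmx mu i)) =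
  \sum_i \sum_j \sum_k (\sum_l D l i * mu l j k) * (mu i j k)^*.
Proof.
rewrite /mxtrace.
transitivity (\sum_l \sum_i \sum_j \sum_k D l i * ((mu i j k)^* * mu l j k)).
  apply: eq_bigr => l _; rewrite mxE; apply: eq_bigr => i _.
  rewrite RtRE mulr_sumr; apply: eq_bigr => j _; by rewrite mulr_sumr.
rewrite perm_lijk; apply: eq_bigr => i _; apply: eq_bigr => j _; apply: eq_bigr => k _.
by rewrite mulr_suml; apply: eq_bigr => l _; ring.
Qed.

Lemma E3 : \tr (D *m \sum_i (adj (Lmx mu i) *m Lmx mu i)) =
  \sum_i \sum_j \sum_k (\sum_l D l j * mu i l k) * (mu i j k)^*.
Proof.
rewrite /mxtrace.
transitivity (\sum_l \sum_j \sum_i \sum_k D l j * ((mu i j k)^* * mu i l k)).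
  apply: eq_bigr => l _; rewrite mxE; apply: eq_bigr => j _.
  rewrite LtLE mulr_sumr; apply: eq_bigr => i _; by rewrite mulr_sumr.
rewrite (@perm_ljik R n (fun l i j k => D l j * ((mu i j k)^* * mu i l k))).
apply: eq_bigr => i _; apply: eq_bigr => j _; apply: eq_bigr => k _.
by rewrite mulr_suml; apply: eq_bigr => l _; ring.
Qed.

Lemma trDM : is_derivation mu D -> \tr (D *m Mmu mu) = 0.
Proof.
move=> hD.
have H : \tr (D *m \sum_i (Lmx mu i *m adj (Lmx mu i))) =
  \tr (D *m \sum_i (adj (Rmx mu i) *m Rmx mu i)) + \tr (D *m \sum_i (adj (Lmx mu i) *m Lmx mu i)).
  rewrite E1 E2 E3 -!big_split; apply: eq_bigr => i _.
  rewrite -!big_split; apply: eq_bigr => j _.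
  rewrite -!big_split; apply: eq_bigr => k _.
  by rewrite (@der_comp R n mu D hD) mulrDl.
rewrite /Mmu !mulmxBr -!scalemxAr !raddfB /= !mxtraceZ H; ring.
Qed.
End TrD.
Theorem proposition4p4 (R : realType) (n : nat) (mu : bil R n)
  (c : R[i]) (D : 'M[R[i]]_n) (ks : seq int) (ds : seq nat) :
  (exists i j k, mu i j k != 0) ->
  crit_data mu c D ->
  is_type D ks ds ->
  ((ks = [:: 0%Z] /\ ds = [:: n]) -> Fn mu = 4%:R / n%:R) /\
  (~ (ks = [:: 0%Z] /\ ds = [:: n]) ->
     Fn mu = 4%:R * (n%:R - (\sum_(i < size ks) (nth 0%Z ks i)%:~R * (nth 0%N ds i)%:R) ^+ 2
                          / (\sum_(i < size ks) (nth 0%Z ks i)%:~R ^+ 2 * (nth 0%N ds i)%:R))^-1).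
Proof.
move=> [i0 [j0 [k0 hmu]]] [creal hD hM] [hsz hsort hds [c0 [c0pos [hchar _]]]].
have n0 : (0 < n)%N := leq_ltn_trans (leq0n _) (ltn_ord i0).
have nR0 : (n%:R : R[i]) != 0 by rewrite pnatr_eq0 -lt0n.
have N0 : norm2 mu != 0.
  apply/eqP => h.
  have h1 := psumr_eq0P (fun i _ => sumr_ge0 _ (fun j _ => sumr_ge0 _ (fun k _ => exprn_ge0 2 (normr_ge0 (mu i j k))))) h (i:=i0) isT.
  have h2 := psumr_eq0P (fun j _ => sumr_ge0 _ (fun k _ => exprn_ge0 2 (normr_ge0 (mu i0 j k)))) h1 (i:=j0) isT.
  have h3 := psumr_eq0P (fun k _ => exprn_ge0 2 (normr_ge0 (mu i0 j0 k))) h2 (i:=k0) isT.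
  by move: hmu; rewrite -normr_eq0 -(sqrf_eq0) /= h3 eqxx.
set N := norm2 mu in N0 *.
have hTM := @trM R n mu; rewrite -/N hM raddfD /= mxtrace_scalar in hTM.
have hTMD := @trDM R n mu D hD; rewrite hM in hTMD.
have hTMD' := hTMD; rewrite mulmxDr mul_mx_scalar raddfD /= mxtraceZ in hTMD'.
have hF : Fn mu = c * (- 2%:R * N) / N ^+ 2.
  rewrite /Fn -/N hM mulmxDl raddfD /= mul_scalar_mx mxtraceZ hTMD addr0.
  by rewrite raddfD /= mxtrace_scalar hTM.
have [S1E S2E] := @eig_sums _ n _ (size ks) (fun i => (nth 0%Z ks i)%:~R) (fun i => nth 0%N ds i) n0 hchar.
rewrite mxtraceZ in S1E.
rewrite -scalemxAl -scalemxAr !mxtraceZ in S2E.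
have c0C : (c0%:C)%C != 0 :> R[i].
  have : (0:R)%:C%C < c0%:C%C by rewrite ltcR.
  by move/lt0r_neq0.
rewrite -[c *+ n]mulr_natr in hTM.
set t1 := \tr D in hTM hTMD' S1E.
set t2 := \tr (D *m D) in hTMD' S2E.
split.
  move=> [eks eds]; rewrite eks eds /= big_ord1 /= mul0r in S1E.
  have t10 : t1 = 0 by apply/eqP; move/eqP: S1E; rewrite mulf_eq0 (negbTE c0C).
  rewrite t10 addr0 in hTM.
  have hc : c = (- 2%:R * N) / n%:R by apply: (mulIf nR0); rewrite mulfVK // hTM.
  rewrite hF hc; field.
  by rewrite N0 nR0.
move=> hne.
have S2nz : \sum_(i < size ks) (nth 0%Z ks i)%:~R ^+ 2 * (nth 0%N ds i)%:R != (0 : R[i]).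
  apply/eqP => hS.
  have ge : forall i : 'I_(size ks), true ->
      0 <= ((nth 0%Z ks i)%:~R ^+ 2 * (nth 0%N ds i)%:R : R[i]).
    by move=> j _; apply: mulr_ge0; [rewrite -realEsqr realz | apply: ler0n].
  have hk : forall i, (i < size ks)%N -> nth 0%Z ks i = 0.
    move=> i hi.
    have := psumr_eq0P ge hS (i:=Ordinal hi) isT; rewrite /=.
    have dpos : (0 < nth 0%N ds i)%N.
      by apply: (allP hds); apply: mem_nth; rewrite -hsz.
    move/eqP; rewrite mulf_eq0 pnatr_eq0 (gtn_eqF dpos) orbF expf_eq0 /= intr_eq0.
    by move/eqP.
  move: hsz hsort hk hchar hne; clear S1E S2E ge hS hds; case: ks => [|a [|b r]] /=.
  - move=> _ _ _ hc _.
    have := size_char_poly (c0%:C%C *: D); rewrite hc big_ord0 size_poly1.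
    by move=> [] hn; rewrite -hn in n0.
  - case: ds => [|d [|e r]] //= _ _ hk hc hne.
    have a0 := hk 0%N isT; rewrite /= in a0.
    have := size_char_poly (c0%:C%C *: D); rewrite hc big_ord1 size_exp_XsubC.
    by move=> [] hdn; apply: hne; rewrite a0 hdn.
  - move=> _ /= /andP [hab _] hk.
    have a0 := hk 0%N isT; have b0 := hk 1%N isT; rewrite /= in a0 b0.
    by move: hab; rewrite a0 b0 ltxx.
have t2nz : t2 != 0 by apply: contraNneq S2nz => h0; rewrite -S2E h0 !mulr0.
have ht2 : t2 = - (c * t1) by apply/eqP; rewrite -subr_eq0 opprK addrC hTMD'.
have cnz : c != 0 by apply: contraNneq t2nz => c0'; rewrite ht2 c0' mul0r oppr0.
have t1nz : t1 != 0 by apply: contraNneq t2nz => c0'; rewrite ht2 c0' mulr0 oppr0.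
have unz : c * n%:R + t1 != 0 by rewrite hTM mulf_neq0 // oppr_eq0 pnatr_eq0.
have hN : N = - (c * n%:R + t1) / 2%:R.
  by rewrite hTM; field.
rewrite hF -S1E -S2E hN ht2.
have h4 : n%:R * - (c * t1) - t1 ^+ 2 != 0.
  have -> : n%:R * - (c * t1) - t1 ^+ 2 = - (t1 * (c * n%:R + t1)) by ring.
  by rewrite oppr_eq0 mulf_neq0.
field.
by apply/and5P; split; [exact: t1nz | exact: cnz | exact: c0C | exact: h4 | exact: unz].
Qed.
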